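(* Partially synchronous Streamlet with $n$ validators provides $\frac{1}{3}$-accountable safety with respect to the Streamlet slashing conditions.
   Context: Streamlet: time is divided into epochs, each with a leader. The leader of epoch $e$ proposes a block extending one of the longest notarized chains it has seen; a validator votes (at most once per epoch) for the leader's proposal if it extends one of the longest notarized chains the validator has seen. A block is notarized once it has votes from at least $2n/3$ validators. If a notarized chain contains three adjacent blocks from consecutive epochs $e-1,e,e+1$, then the block of epoch $e$ and its prefix are finalized. For a block $B$, $e_B$ denotes its epoch and $|B|$ its depth. Streamlet slashing conditions: a validator violates a slashing condition if (1) it votes for two blocks $B_1,B_2$ with $e_{B_1}=e_{B_2}$, or (2) it votes for $B_1,B_2$ with $e_{B_1}<e_{B_2}$ but $|B_1|>|B_2|$. A protocol provides $\alpha$-accountable safety if (1) in the case of a safety violation of the produced ledger, at least $\alpha n$ validators can be irrefutably accused, in particular shown to have violated a slashing condition, and (2) honest validators never violate the slashing conditions. *)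

(* Defs.v *)
From mathcomp Require Import all_boot.
Set Implicit Arguments. Unset Strict Implicit. Unset Printing Implicit Defensive.

Section Streamlet.
Variable P : eqType.

(* A block is identified with the list of (epoch, payload) entries of the
   chain from (excluding) genesis up to it, oldest first.  The genesis block
   is the empty list and has epoch 0; every other block has epoch >= 1. *)
Definition block := {s : seq (nat * P) | all (fun x => 0 < x.1) s}.

Definition genesis (B : block) : bool := val B == [::].

Definition epoch (B : block) : nat := last 0 (map fst (val B)).

Definition depth (B : block) : nat := size (val B).

Definition ancestor (B1 B2 : block) : bool := prefix (val B1) (val B2).

Definition parent (Bp B : block) : Prop := exists x, val B = rcons (val Bp) x.

Definition conflicting (B1 B2 : block) : bool :=
  ~~ ancestor B1 B2 && ~~ ancestor B2 B1.

Variable n : nat.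

Definition votes := 'I_n -> block -> bool.

Definition voters (V : votes) (B : block) : {set 'I_n} := [set i | V i B].

Definition notarized (V : votes) (B : block) : Prop :=
  genesis B \/ 2 * n <= 3 * #|voters V B|.

Definition notarized_chain (V : votes) (B : block) : Prop :=
  forall B', ancestor B' B -> notarized V B'.

Definition finalized (V : votes) (F : block) : Prop :=
  exists C B0 B1 B2,
    [/\ notarized_chain V C, ancestor B2 C, parent B0 B1, parent B1 B2 &
        [/\ (epoch B0).+1 = epoch B1, (epoch B1).+1 = epoch B2 & ancestor F B1]].

Definition violates (V : votes) (i : 'I_n) : Prop :=
  exists B1 B2, [/\ V i B1, V i B2 &
    ((B1 <> B2 /\ epoch B1 = epoch B2) \/
     (epoch B1 < epoch B2 /\ depth B2 < depth B1))].

Definition subvotes (V1 V2 : votes) : Prop := forall i B, V1 i B -> V2 i B.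

(* Honest behaviour of validator i: it votes at most once per epoch, and
   when it votes for B (in epoch e_B), B extends one of the longest
   notarized chains in the set of votes it has seen by then; seen votes
   only grow over time. *)
Definition honest (V : votes) (i : 'I_n) : Prop :=
  exists view : nat -> votes,
    [/\ (forall t1 t2, t1 <= t2 -> subvotes (view t1) (view t2)),
        (forall B1 B2, V i B1 -> V i B2 -> epoch B1 = epoch B2 -> B1 = B2) &
        (forall B, V i B -> exists Bp,
           [/\ parent Bp B, notarized_chain (view (epoch B)) Bp &
               forall C, notarized_chain (view (epoch B)) C -> depth C <= depth Bp])].

End Streamlet.

(* Main.v *)
Require Import Defs.
From mathcomp Require Import all_boot.
From mathcomp Require Import zify.
Set Implicit Arguments. Unset Strict Implicit.

Section Proofs.
Variable P : eqType.
Variable n : nat.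
Implicit Types (A B C X Y Z : block P) (V : votes P n).

Lemma epoch_pos B : ~~ genesis B -> 0 < epoch B.
Proof.
case: B => s Hs; rewrite /genesis /epoch /=.
elim/last_ind: s Hs => [|s x _] //; rewrite all_rcons => /andP [Hx _] _.
by rewrite map_rcons last_rcons.
Qed.

Lemma genesis_depth B : genesis B = (depth B == 0).
Proof. by case: B => [[|x s] Hs]. Qed.

Lemma genesis_epoch B : genesis B -> epoch B = 0.
Proof. by case: B => [[|x s] Hs]. Qed.

Lemma parent_depth Bp B : parent Bp B -> depth B = (depth Bp).+1.
Proof. by case=> x; rewrite /depth => ->; apply: size_rcons. Qed.

Lemma parent_anc Bp B : parent Bp B -> ancestor Bp B.
Proof.
case=> x; rewrite /ancestor => ->; rewrite -cats1; exact: prefix_prefix.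
Qed.

Lemma anc_trans A B C : ancestor A B -> ancestor B C -> ancestor A C.
Proof. exact: prefix_trans. Qed.

Lemma nchain_anc V B C : notarized_chain V C -> ancestor B C -> notarized V B.
Proof. by move=> H; apply: H. Qed.

Lemma notarized_mono V1 V2 B : subvotes V1 V2 -> notarized V1 B -> notarized V2 B.
Proof.
move=> S [G|H]; [by left|right].
apply: (leq_trans H); rewrite leq_mul2l; apply/orP; right.
apply: subset_leq_card; apply/subsetP => i; rewrite !inE; exact: S.
Qed.

Lemma nchain_mono V1 V2 B : subvotes V1 V2 -> notarized_chain V1 B -> notarized_chain V2 B.
Proof. by move=> S H B' HB; apply: notarized_mono S (H B' HB). Qed.

Lemma anc_comparable A B C : ancestor A C -> ancestor B C -> ancestor A B || ancestor B A.
Proof.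
rewrite /ancestor !prefixE => /eqP HA /eqP HB.
case: (leqP (size (val A)) (size (val B))) => H.
  by apply/orP; left; rewrite -HB take_takel // HA.
by apply/orP; right; rewrite -HA take_takel ?HB //; exact: ltnW.
Qed.

Definition trunc B (k : nat) : block P.
Proof.
exists (take k (val B)).
have := valP B; rewrite -{1}(cat_take_drop k (val B)) all_cat => /andP [] h _; exact: h.
Defined.

Lemma trunc_anc B k : ancestor (trunc B k) B.
Proof. exact: prefix_take. Qed.

Lemma trunc_depth B k : k <= depth B -> depth (trunc B k) = k.
Proof. by move=> H; rewrite /depth /= size_takel. Qed.

Lemma pair_slash V X Y :
  2 * n <= 3 * #|voters V X| -> 2 * n <= 3 * #|voters V Y| ->
  (X <> Y /\ epoch X = epoch Y \/ epoch X < epoch Y /\ depth Y < depth X) ->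
  exists S : {set 'I_n}, n <= 3 * #|S| /\ forall i, i \in S -> violates V i.
Proof.
move=> HX HY Hc; exists (voters V X :&: voters V Y); split.
  have := cardsUI (voters V X) (voters V Y).
  have : #|voters V X :|: voters V Y| <= n.
    by rewrite -[n in _ <= n]card_ord; apply: max_card.
  lia.
move=> i; rewrite !inE => /andP [h1 h2]; exists X, Y; split => //.
Qed.

Lemma key V A0 A1 A2 Z :
  notarized V A0 -> notarized V A1 -> notarized V A2 -> notarized V Z ->
  parent A0 A1 -> parent A1 A2 ->
  (epoch A0).+1 = epoch A1 -> (epoch A1).+1 = epoch A2 ->
  depth Z = depth A1 -> Z <> A1 ->
  exists S : {set 'I_n}, n <= 3 * #|S| /\ forall i, i \in S -> violates V i.
Proof.
move=> N0 N1 N2 NZ p1 p2 e1 e2 dZ ZA.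
have d1 := parent_depth p1; have d2 := parent_depth p2.
have ng B : 0 < depth B -> notarized V B -> 2 * n <= 3 * #|voters V B|.
  by move=> H [|//]; rewrite genesis_depth; move/eqP; lia.
have V1 : 2 * n <= 3 * #|voters V A1| by apply: ng N1; lia.
have V2 : 2 * n <= 3 * #|voters V A2| by apply: ng N2; lia.
have VZ : 2 * n <= 3 * #|voters V Z| by apply: ng NZ; lia.
have eZ : 0 < epoch Z by apply: epoch_pos; rewrite genesis_depth; lia.
case: (ltngtP (epoch Z) (epoch A1)) => hz.
- case: N0 => [G0|V0].
    by move: (genesis_epoch G0) => h; lia.
  case: (ltngtP (epoch Z) (epoch A0)) => hz0; try lia.
    by apply: (pair_slash VZ V0); right; lia.
  apply: (pair_slash VZ V0); left; split => // E; subst; lia.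
- case: (ltngtP (epoch Z) (epoch A2)) => hz2; try lia.
    by apply: (pair_slash V2 VZ); right; lia.
  apply: (pair_slash VZ V2); left; split => // E; subst; lia.
- by apply: (pair_slash VZ V1); left.
Qed.

Lemma part1 (V V1 V2 : votes P n) (F1 F2 : block P) :
     subvotes V1 V -> subvotes V2 V ->
     finalized V1 F1 -> finalized V2 F2 -> conflicting F1 F2 ->
     exists S : {set 'I_n}, n <= 3 * #|S| /\ forall i, i \in S -> violates V i.
Proof.
move=> s1 s2 [C [A0 [A1 [A2 [nc ac pa1 pa2 [ea1 ea2 fa]]]]]]
  [D [B0 [B1 [B2 [nd ad pb1 pb2 [eb1 eb2 fb]]]]]] /andP [c1 c2].
have nA B : ancestor B A2 -> notarized V B.
  move=> h; apply: (notarized_mono s1); apply: nc; exact: anc_trans h ac.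
have nB B : ancestor B B2 -> notarized V B.
  move=> h; apply: (notarized_mono s2); apply: nd; exact: anc_trans h ad.
have aA1 := parent_anc pa2; have aA0 := anc_trans (parent_anc pa1) aA1.
have aB1 := parent_anc pb2; have aB0 := anc_trans (parent_anc pb1) aB1.
have pref : ancestor A2 A2 /\ ancestor B2 B2 by split; apply: prefix_refl.
case: pref => rA rB.
have nAB : ~~ ancestor A1 B1.
  apply/negP => h; have := anc_comparable (anc_trans fa h) fb.
  by rewrite (negbTE c1) (negbTE c2).
have nBA : ~~ ancestor B1 A1.
  apply/negP => h; have := anc_comparable fa (anc_trans fb h).
  by rewrite (negbTE c1) (negbTE c2).
case: (leqP (depth A1) (depth B1)) => hd.
- apply: (key (Z := trunc B1 (depth A1)) (nA _ aA0) (nA _ aA1) (nA _ rA) _ pa1 pa2 ea1 ea2).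
  + apply: nB; exact: anc_trans (trunc_anc _ _) aB1.
  + exact: trunc_depth.
  + by move=> E; move/negP: nAB; apply; rewrite -E; apply: trunc_anc.
- apply: (key (Z := trunc A1 (depth B1)) (nB _ aB0) (nB _ aB1) (nB _ rB) _ pb1 pb2 eb1 eb2).
  + apply: nA; exact: anc_trans (trunc_anc _ _) aA1.
  + apply: trunc_depth; exact: ltnW.
  + by move=> E; move/negP: nBA; apply; rewrite -E; apply: trunc_anc.
Qed.

Lemma part2 (V : votes P n) (i : 'I_n) : honest V i -> ~ violates V i.
Proof.
move=> [view [mono uniq par]] [B1 [B2 [v1 v2 [[ne eq]|[lt ld]]]]].
  by apply: ne; apply: uniq.
have [Bp1 [pp1 nc1 _]] := par _ v1.
have [Bp2 [pp2 nc2 mx]] := par _ v2.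
have := mx Bp1 (nchain_mono (mono _ _ (ltnW lt)) nc1).
have := parent_depth pp1; have := parent_depth pp2; lia.
Qed.

End Proofs.

Theorem theorem2 (P : eqType) (n : nat) :
  (forall (V V1 V2 : votes P n) (F1 F2 : block P),
     subvotes V1 V -> subvotes V2 V ->
     finalized V1 F1 -> finalized V2 F2 -> conflicting F1 F2 ->
     exists S : {set 'I_n}, n <= 3 * #|S| /\ forall i, i \in S -> violates V i)
  /\
  (forall (V : votes P n) (i : 'I_n), honest V i -> ~ violates V i).
Proof.
split; [exact: part1 | exact: part2].
Qed.
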